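(* Let $\mathcal A$ be a $C^*$-algebra with identity $1$, let $\delta\colon\mathcal A\to\mathcal A$ be a $^*$-endomorphism, and let $\delta_{*1},\delta_{*2}$ be two non-degenerate transfer operators for $(\mathcal A,\delta)$. Then $\delta_{*1}(1)=\delta_{*2}(1)$ and $\delta_{*1}(\mathcal A)=\delta_{*2}(\mathcal A)$.
   Context: A transfer operator for $(\mathcal A,\delta)$ is a continuous positive linear map $\delta_*\colon\mathcal A\to\mathcal A$ such that $\delta_*(\delta(a)b)=a\,\delta_*(b)$ for all $a,b\in\mathcal A$. A transfer operator $\delta_*$ is called non-degenerate if $\delta(\delta_*(1))=\delta(1)$ (equivalently, $\delta\circ\delta_*\circ\delta=\delta$). *)

(* Defs.v *)
From HB Require Import structures.
From mathcomp Require Import all_boot all_order all_algebra.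
From mathcomp Require Import complex.
From mathcomp Require Import reals.
Set Implicit Arguments. Unset Strict Implicit. Unset Printing Implicit Defensive.
Import Order.TTheory GRing.Theory Num.Theory.
Local Open Scope ring_scope.

Record cstar_algebra (R : realType) (A : algType R[i]) := CStarAlgebra {
  star : A -> A;
  cnorm : A -> R;
  starK : forall a, star (star a) = a;
  starD : forall a b, star (a + b) = star a + star b;
  starZ : forall (c : R[i]) a, star (c *: a) = (Num.conj c) *: star a;
  starM : forall a b, star (a * b) = star b * star a;
  cnorm_ge0 : forall a, 0 <= cnorm a;
  cnorm_eq0 : forall a, cnorm a = 0 -> a = 0;
  cnormD : forall a b, cnorm (a + b) <= cnorm a + cnorm b;
  cnormZ : forall (c : R[i]) a, ((cnorm (c *: a))%:C)%C = `|c| * ((cnorm a)%:C)%C;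
  cnormM : forall a b, cnorm (a * b) <= cnorm a * cnorm b;
  cnorm_cstar : forall a, cnorm (star a * a) = cnorm a ^+ 2;
  cnorm_complete : forall u : nat -> A,
    (forall e : R, 0 < e -> exists N : nat, forall m n : nat,
        (N <= m)%N -> (N <= n)%N -> cnorm (u m - u n) < e) ->
    exists l : A, forall e : R, 0 < e -> exists N : nat, forall n : nat,
        (N <= n)%N -> cnorm (u n - l) < e
}.

Section Defs.
Variables (R : realType) (A : algType R[i]) (S : cstar_algebra A).

Definition clinear (f : A -> A) : Prop :=
  (forall a b, f (a + b) = f a + f b) /\ (forall (c : R[i]) a, f (c *: a) = c *: f a).

Definition ccontinuous (f : A -> A) : Prop :=
  forall a (e : R), 0 < e -> exists2 d : R, 0 < d &
    forall b, cnorm S (b - a) < d -> cnorm S (f b - f a) < e.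

Definition cpositive (a : A) : Prop := exists b, a = star S b * b.

Definition positive_map (f : A -> A) : Prop :=
  forall a, cpositive a -> cpositive (f a).

Definition star_endomorphism (d : A -> A) : Prop :=
  [/\ clinear d, (forall a b, d (a * b) = d a * d b) &
      (forall a, d (star S a) = star S (d a))].

Definition transfer_operator (d ds : A -> A) : Prop :=
  [/\ ccontinuous ds, positive_map ds, clinear ds &
      forall a b, ds (d a * b) = a * ds b].

Definition nondegenerate_transfer (d ds : A -> A) : Prop := d (ds 1) = d 1.

End Defs.

(* Main.v *)
Require Import Defs.
From HB Require Import structures.
From mathcomp Require Import all_boot all_order all_algebra.
From mathcomp Require Import complex.
From mathcomp Require Import reals.
Import Order.TTheory GRing.Theory Num.Theory.
Local Open Scope ring_scope.

Section Aux.
Variables (R : realType) (A : algType R[i]) (S : cstar_algebra A).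
Local Notation st := (star S).

Lemma stN x : st (- x) = - st x.
Proof. by rewrite -scaleN1r starZ conjCN1 scaleN1r. Qed.
Lemma st1 : st 1 = 1.
Proof. by rewrite -[st 1]mulr1 -{2}(starK S 1) -starM mulr1 starK. Qed.
Lemma stB x y : st (x - y) = st x - st y.
Proof. by rewrite starD stN. Qed.
Lemma stMn x n : st (x *+ n) = st x *+ n.
Proof.
elim: n => [|n IH].
  by rewrite !mulr0n -{1}(scale0r (0 : A)) starZ conjC0 scale0r.
by rewrite !mulrS starD IH.
Qed.

Lemma canceln (n : nat) (x y : A) : (0 < n)%N -> x *+ n = y *+ n -> x = y.
Proof.
move=> n0 H.
have key : forall z : A, (n%:R^-1 : R[i]) *: (z *+ n) = z.
  move=> z; rewrite -scalerMnr scalerMnl -mulr_natr mulVf ?scale1r //.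
  by rewrite pnatr_eq0 -lt0n.
by rewrite -(key x) H key.
Qed.

Variable ds : A -> A.
Hypothesis lin : clinear ds.
Hypothesis pos : positive_map S ds.

Lemma ds0 : ds 0 = 0.
Proof. by rewrite -{1}(scale0r (0 : A)) lin.2 scale0r. Qed.
Lemma dsN x : ds (- x) = - ds x.
Proof. by rewrite -scaleN1r lin.2 scaleN1r. Qed.
Lemma dsB x y : ds (x - y) = ds x - ds y.
Proof. by rewrite lin.1 dsN. Qed.
Lemma dsMn x n : ds (x *+ n) = ds x *+ n.
Proof. elim: n => [|n IH]; first by rewrite !mulr0n ds0.
by rewrite !mulrS lin.1 IH. Qed.

Lemma pos_sa p : cpositive S p -> st (ds p) = ds p.
Proof. move=> /pos [b ->]. by rewrite starM starK. Qed.

Lemma sa_sa h : st h = h -> st (ds h) = ds h.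
Proof.
move=> Hh.
have P1 : cpositive S ((h + 1) * (h + 1)) by exists (h + 1); rewrite starD st1 Hh.
have P2 : cpositive S ((h - 1) * (h - 1)) by exists (h - 1); rewrite stB st1 Hh.
have E : (h + 1) * (h + 1) - (h - 1) * (h - 1) = h *+ 4.
  rewrite !mulrDr !mulrDl !mulrN !mulNr !mulr1 !mul1r opprK.
  set u := h * h.
  rewrite !opprD !opprK !addrA.
  rewrite (addrAC (u + h + h) 1) (addrAC (u + h) h) (addrAC u h) subrr add0r.
  rewrite (addrAC (h + h) 1) (addrAC (h + h + h) 1) addrK.
  by rewrite !mulrS mulr0n addr0 !addrA.
apply: (@canceln 4) => //.
rewrite -stMn -dsMn -E dsB stB !pos_sa //.
Qed.

Lemma ds_star a : st (ds a) = ds (st a).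
Proof.
have ci : Num.conj ('i : R[i]) = - 'i by apply: conjCi.
pose h := a + st a; pose k := 'i *: (st a - a).
have Hh : st h = h by rewrite /h starD starK addrC.
have Hk : st k = k by rewrite /k starZ ci stB starK scaleNr -scalerN opprB.
have E1 : h + 'i *: k = a *+ 2.
  rewrite /h /k scalerA mulCii scaleN1r opprB addrA.
  by rewrite (addrAC a (st a) a) addrK mulr2n.
have E2 : h - 'i *: k = st a *+ 2.
  rewrite /h /k scalerA mulCii scaleN1r opprK addrA.
  by rewrite (addrC a (st a)) (addrAC (st a) a (st a)) addrK mulr2n.
clearbody h k.
apply: (@canceln 2) => //.
rewrite -stMn -!dsMn -E1 -E2 lin.1 dsB !lin.2 starD !starZ !sa_sa // ci scaleNr.
by [].
Qed.
End Aux.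

Section Main.
Variables (R : realType) (A : algType R[i]) (S : cstar_algebra A).
Local Notation st := (star S).
Variables (delta ds : A -> A).
Hypothesis (Hto : transfer_operator S delta ds) (Hnd : nondegenerate_transfer delta ds).

Lemma ds_delta x : ds (delta x) = x * ds 1.
Proof. by case: Hto => _ _ _ H; rewrite -H mulr1. Qed.

Lemma e_sa : st (ds 1) = ds 1.
Proof. case: Hto => _ pos lin _; exact: (@sa_sa R A S ds lin pos 1 (@st1 R A S)). Qed.

Lemma e_left a : ds 1 * ds a = ds a.
Proof. case: Hto => _ _ _ H; by rewrite -H Hnd H mul1r. Qed.

Lemma e_right a : ds a * ds 1 = ds a.
Proof.
case: Hto => _ pos lin _.
rewrite -[LHS](starK S) -[RHS](starK S); congr (st _).
by rewrite starM e_sa (@ds_star R A S ds lin pos) e_left.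
Qed.
End Main.
Arguments ds_delta {R A S delta ds}.
Arguments e_sa {R A S delta ds}.
Arguments e_right {R A S delta ds}.

Theorem proposition5 (R : realType) (A : algType R[i]) (S : cstar_algebra A)
  (delta ds1 ds2 : A -> A) :
  star_endomorphism S delta ->
  transfer_operator S delta ds1 -> nondegenerate_transfer delta ds1 ->
  transfer_operator S delta ds2 -> nondegenerate_transfer delta ds2 ->
  ds1 1 = ds2 1 /\
  (forall x : A, (exists a, ds1 a = x) <-> (exists a, ds2 a = x)).
Proof.
move=> _ T1 N1 T2 N2.
have E12 : ds1 1 * ds2 1 = ds2 1.
  by rewrite -(ds_delta T2) N1 (ds_delta T2) mul1r.
have E21 : ds2 1 * ds1 1 = ds1 1.
  by rewrite -(ds_delta T1) N2 (ds_delta T1) mul1r.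
have E : ds1 1 = ds2 1.
  rewrite -{1}E21 -(e_sa T1) -{1}(e_sa T2) -starM E12.
  by rewrite (e_sa T2).
split=> // x; split=> -[a <-].
  by exists (delta (ds1 a)); rewrite (ds_delta T2) -E (e_right T1 N1).
by exists (delta (ds2 a)); rewrite (ds_delta T1) E (e_right T2 N2).
Qed.
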